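(* Let $\lambda\in(0,1)$, put $k=1/\sqrt\lambda$, and assume $D(k)\neq0$, where $D(k)=-(1-k)^2e^{-(1+k)}-(1-k)^2e^{1+k}+(1+k)^2e^{k-1}+(1+k)^2e^{1-k}-8k$. Let $(y,z,p_y,p_z)$ be any solution on $[0,1]$ of the regularized Pontryagin system $$\lambda\dot y=p_y+p_z-\lambda y,\quad \lambda\dot z=p_y+p_z,\quad \dot p_y=p_y-z+2y,\quad \dot p_z=z-y,$$ with boundary conditions $y(0)=z(0)=0$, $y(1)=0$, $z(1)=1$. Then $x:=z-y$ coincides on $[0,1]$ with the unique function of the form $a e^{t}+b e^{-t}+c e^{t/\sqrt\lambda}+d e^{-t/\sqrt\lambda}$ satisfying $x(0)=0$, $x(1)=1$, $\dot x(0)=\dot x(1)=0$. That is, the regular optimal trajectory equals the exponential-ansatz shortcut-to-adiabaticity trajectory with $k=1/\sqrt\lambda$.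
   Context: The regularized Pontryagin system is the extremal system of the optimal control problem $\dot y=v-y$, $\dot z=v$, minimize $\int_0^1[(z-y)^2+y^2+\lambda v^2]dt$, with optimal control $v_R=(p_y+p_z)/\lambda$; here $y=\dot x$, $z=u$ for the dynamics $\dot x+x=u$. *)

(* Defs.v *)
From Stdlib Require Import Reals Lra.
Open Scope R_scope.

Definition Dk (k : R) : R :=
  - (1 - k) ^ 2 * exp (- (1 + k)) - (1 - k) ^ 2 * exp (1 + k)
  + (1 + k) ^ 2 * exp (k - 1) + (1 + k) ^ 2 * exp (1 - k) - 8 * k.

Definition ansatz (k a b c d : R) (t : R) : R :=
  a * exp t + b * exp (- t) + c * exp (k * t) + d * exp (- (k * t)).

Definition ansatz_bc (k a b c d : R) : Prop :=
  ansatz k a b c d 0 = 0 /\ ansatz k a b c d 1 = 1 /\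
  derivable_pt_lim (ansatz k a b c d) 0 0 /\
  derivable_pt_lim (ansatz k a b c d) 1 0.

(* Main.v *)
Require Import Defs.
From Stdlib Require Import Reals Lra.
From Coquelicot Require Import Coquelicot.
Open Scope R_scope.

Lemma const_on (g : R -> R) :
  (forall t, 0 <= t <= 1 -> derivable_pt_lim g t 0) ->
  forall t, 0 <= t <= 1 -> g t = g 0.
Proof.
intros H t Ht. destruct (Req_dec t 0) as [->|Hn]; auto.
symmetry; apply (eq_is_derive g 0 t); [|lra].
intros s Hs. apply is_derive_Reals. apply H. lra.
Qed.

Lemma eig (phi : R -> R) r :
  (forall t, 0 <= t <= 1 -> derivable_pt_lim phi t (r * phi t)) ->
  forall t, 0 <= t <= 1 -> phi t = phi 0 * exp (r * t).
Proof.
intros H t Ht.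
assert (G := const_on (fun s => phi s * exp (- (r * s)))).
assert (Hg : forall s, 0 <= s <= 1 -> derivable_pt_lim (fun s => phi s * exp (- (r * s))) s 0).
{ intros s Hs. apply is_derive_Reals.
  eapply is_derive_ext. { intros u; reflexivity. }
  replace 0 with (r * phi s * exp (- (r*s)) + phi s * (-(r) * exp (-(r*s)))) by ring.
  apply (is_derive_mult phi (fun s => exp (- (r*s)))).
  - apply is_derive_Reals. apply H; auto.
  - auto_derive; auto; ring.
  - intros; apply Rmult_comm. }
specialize (G Hg t Ht). simpl in G.
rewrite Rmult_0_r, Ropp_0, exp_0, Rmult_1_r in G.
rewrite <- G. rewrite Rmult_assoc; rewrite <- exp_plus.
replace (- (r * t) + r * t) with 0 by ring. rewrite exp_0; ring.
Qed.

Lemma lin4 (w1 w2 w3 w4 : R) (y z py pz : R -> R) t dy dz dpy dpz :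
  derivable_pt_lim y t dy -> derivable_pt_lim z t dz ->
  derivable_pt_lim py t dpy -> derivable_pt_lim pz t dpz ->
  derivable_pt_lim (fun s => w1*y s + w2*z s + w3*py s + w4*pz s) t
    (w1*dy+w2*dz+w3*dpy+w4*dpz).
Proof.
intros H1 H2 H3 H4. apply is_derive_Reals.
apply is_derive_Reals in H1, H2, H3, H4.
repeat apply @is_derive_plus; apply @is_derive_scal; auto.
Qed.

Lemma dans k a b c d t :
  derivable_pt_lim (ansatz k a b c d) t
    (a * exp t - b * exp (- t) + k * c * exp (k * t) - k * d * exp (- (k * t))).
Proof.
apply is_derive_Reals. unfold ansatz. auto_derive; auto. ring.
Qed.
Lemma hom4 k E F a b c d : 1 < k -> 0 < E -> 0 < F ->
  -(1-k)^2*(/(E*F) + E*F) + (1+k)^2*(F*/E + E*/F) - 8*k <> 0 ->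
  a + b + c + d = 0 -> a - b + k*c - k*d = 0 ->
  a*E + b*/E + c*F + d*/F = 0 -> a*E - b*/E + k*c*F - k*d*/F = 0 ->
  a = 0 /\ b = 0 /\ c = 0 /\ d = 0.
Proof.
intros hk hE hF hD e1 e2 e3 e4.
set (P := -(1+k)*E-(1-k)/E+2*F). set (Q := -(1-k)*E-(1+k)/E+2/F).
set (R := -(1+k)*E+(1-k)/E+2*k*F). set (S := -(1-k)*E+(1+k)/E-2*k/F).
assert (ha : 2*a = -((1+k)*c + (1-k)*d)) by lra.
assert (hb : 2*b = -((1-k)*c + (1+k)*d)) by lra.
assert (hP : P*c + Q*d = 0).
{ assert (E*(2*a) + (2*b)/E + 2*F*c + 2*d/F = 0).
  { replace (E*(2*a) + (2*b)/E + 2*F*c + 2*d/F) with (2*(a*E + b*/E + c*F + d*/F)) by (field; lra).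
    rewrite e3; ring. }
  rewrite ha, hb in H. rewrite <- H. unfold P, Q. field; lra. }
assert (hR : R*c + S*d = 0).
{ assert (E*(2*a) - (2*b)/E + 2*k*F*c - 2*k*d/F = 0).
  { replace (E*(2*a) - (2*b)/E + 2*k*F*c - 2*k*d/F) with (2*(a*E - b*/E + k*c*F - k*d*/F)) by (field; lra).
    rewrite e4; ring. }
  rewrite ha, hb in H. rewrite <- H. unfold R, S. field; lra. }
assert (hdet : P*S - Q*R = 2*(-(1-k)^2*(/(E*F) + E*F) + (1+k)^2*(F*/E + E*/F) - 8*k)).
{ unfold P, Q, R, S. field; lra. }
assert (hc : (P*S - Q*R) * c = 0).
{ replace ((P*S - Q*R) * c) with (S*(P*c+Q*d) - Q*(R*c+S*d)) by ring. rewrite hP, hR; ring. }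
assert (hd : (P*S - Q*R) * d = 0).
{ replace ((P*S - Q*R) * d) with (P*(R*c+S*d) - R*(P*c+Q*d)) by ring. rewrite hP, hR; ring. }
rewrite hdet in hc, hd.
apply Rmult_integral in hc; apply Rmult_integral in hd.
destruct hc as [hc|hc]; [lra|]. destruct hd as [hd|hd]; [lra|].
subst c d. lra.
Qed.

Definition lc (w1 w2 w3 w4 : R) (y z py pz : R -> R) : R -> R :=
  fun s => w1*y s + w2*z s + w3*py s + w4*pz s.

Lemma dpl_val f x l l' : derivable_pt_lim f x l -> l = l' -> derivable_pt_lim f x l'.
Proof. intros H ->; exact H. Qed.

Theorem mainTheorem6 (lam : R) (y z py pz : R -> R) :
  0 < lam < 1 ->
  Dk (/ sqrt lam) <> 0 ->
  (forall t, 0 <= t <= 1 ->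
     derivable_pt_lim y t ((py t + pz t - lam * y t) / lam) /\
     derivable_pt_lim z t ((py t + pz t) / lam) /\
     derivable_pt_lim py t (py t - z t + 2 * y t) /\
     derivable_pt_lim pz t (z t - y t)) ->
  y 0 = 0 -> z 0 = 0 -> y 1 = 0 -> z 1 = 1 ->
  exists a b c d : R,
    ansatz_bc (/ sqrt lam) a b c d /\
    (forall a' b' c' d', ansatz_bc (/ sqrt lam) a' b' c' d' ->
       a' = a /\ b' = b /\ c' = c /\ d' = d) /\
    (forall t, 0 <= t <= 1 -> z t - y t = ansatz (/ sqrt lam) a b c d t).
Proof.
intros Hl HD Hsys y0 z0 y1 z1.
assert (hs : 0 < sqrt lam < 1).
{ split. apply sqrt_lt_R0; lra. rewrite <- sqrt_1. apply sqrt_lt_1; lra. }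
set (k := / sqrt lam) in *.
assert (hks : k * sqrt lam = 1) by (unfold k; field; lra).
assert (hk : 1 < k) by nra.
assert (Hlam : lam = /(k*k)).
{ rewrite <- (sqrt_sqrt lam) by lra. unfold k. field; lra. }
clearbody k. rewrite Hlam in Hsys. clear Hlam hks hs Hl.
assert (EG : forall w1 w2 w3 w4 r,
  w1*(-1) + w3*2 + w4*(-1) = r*w1 -> -w3 + w4 = r*w2 ->
  (w1 + w2)*(k*k) + w3 = r*w3 -> (w1+w2)*(k*k) = r*w4 ->
  forall t, 0 <= t <= 1 -> lc w1 w2 w3 w4 y z py pz t = lc w1 w2 w3 w4 y z py pz 0 * exp (r*t)).
{ intros w1 w2 w3 w4 r c1 c2 c3 c4. apply eig. intros t ht.
  destruct (Hsys t ht) as (h1&h2&h3&h4).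
  eapply dpl_val. apply (lin4 w1 w2 w3 w4 y z py pz t _ _ _ _ h1 h2 h3 h4).
  unfold lc. apply (Rmult_eq_reg_l 1); [|lra].
  replace (1 * (w1 * ((py t + pz t - / (k * k) * y t) / / (k * k)) + w2 * ((py t + pz t) / / (k * k)) +
   w3 * (py t - z t + 2 * y t) + w4 * (z t - y t)))
  with ((w1*(-1) + w3*2 + w4*(-1)) * y t + (-w3+w4) * z t + ((w1 + w2)*(k*k) + w3) * py t
        + ((w1+w2)*(k*k)) * pz t) by (field; lra).
  rewrite c1, c2, c3, c4. ring. }
set (m := k*k).
assert (P1 := EG 1 (-1) 1 0 1 ltac:(ring) ltac:(ring) ltac:(ring) ltac:(ring)).
assert (Pm := EG (m-2) (-m) m (2*m) (-1) ltac:(ring) ltac:(ring) ltac:(unfold m; ring) ltac:(unfold m; ring)).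
assert (Pk := EG k (-1) (k*k) (k*(k-1)) k ltac:(ring) ltac:(ring) ltac:(ring) ltac:(ring)).
assert (Pn := EG (-k) (-1) (k*k) (k*(k+1)) (-k) ltac:(ring) ltac:(ring) ltac:(ring) ltac:(ring)).
clear EG.
assert (hm : m - 1 <> 0) by (unfold m; nra).
set (al := /(2*(m-1))).
set (a := -m*al * lc 1 (-1) 1 0 y z py pz 0).
set (b := -al * lc (m-2) (-m) m (2*m) y z py pz 0).
set (c := al * lc k (-1) (k*k) (k*(k-1)) y z py pz 0).
set (d := al * lc (-k) (-1) (k*k) (k*(k+1)) y z py pz 0).
assert (X : forall t, 0 <= t <= 1 -> z t - y t = ansatz k a b c d t).
{ intros t ht. unfold ansatz.
  transitivity (-m*al * lc 1 (-1) 1 0 y z py pz t + -al * lc (m-2) (-m) m (2*m) y z py pz t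
     + al * lc k (-1) (k*k) (k*(k-1)) y z py pz t + al * lc (-k) (-1) (k*k) (k*(k+1)) y z py pz t).
  { unfold lc, al, m. unfold m in hm. field. exact hm. }
  rewrite (P1 t ht), (Pm t ht), (Pk t ht), (Pn t ht).
  replace (1*t) with t by ring. replace (-1*t) with (-t) by ring.
  replace (-k*t) with (-(k*t)) by ring. unfold a, b, c, d. ring. }
assert (Y : forall t, 0 <= t <= 1 ->
  y t = a * exp t - b * exp (- t) + k * c * exp (k * t) - k * d * exp (- (k * t))).
{ intros t ht.
  transitivity (-m*al * lc 1 (-1) 1 0 y z py pz t - (-al) * lc (m-2) (-m) m (2*m) y z py pz t
     + k*(al * lc k (-1) (k*k) (k*(k-1)) y z py pz t) - k*(al * lc (-k) (-1) (k*k) (k*(k+1)) y z py pz t)).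
  { unfold lc, al, m. unfold m in hm. field. exact hm. }
  rewrite (P1 t ht), (Pm t ht), (Pk t ht), (Pn t ht).
  replace (1*t) with t by ring. replace (-1*t) with (-t) by ring.
  replace (-k*t) with (-(k*t)) by ring. unfold a, b, c, d. ring. }
assert (h0 : 0 <= 0 <= 1) by lra. assert (h1 : 0 <= 1 <= 1) by lra.
assert (BC : ansatz_bc k a b c d).
{ unfold ansatz_bc. split; [rewrite <- (X 0 h0); lra|]. split; [rewrite <- (X 1 h1); lra|].
  split.
  - eapply dpl_val. apply dans. rewrite <- (Y 0 h0); auto.
  - eapply dpl_val. apply dans. rewrite <- (Y 1 h1); auto. }
exists a, b, c, d. split; [exact BC|]. split; [|exact X].
intros a' b' c' d' [e0 [e1 [e2 e3]]].
destruct BC as [f0 [f1 [f2 f3]]].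
apply (fun h => uniqueness_limite _ _ _ _ h (dans k a' b' c' d' 0)) in e2.
apply (fun h => uniqueness_limite _ _ _ _ h (dans k a' b' c' d' 1)) in e3.
apply (fun h => uniqueness_limite _ _ _ _ h (dans k a b c d 0)) in f2.
apply (fun h => uniqueness_limite _ _ _ _ h (dans k a b c d 1)) in f3.
unfold ansatz in e0, e1, f0, f1.
rewrite Rmult_0_r, Ropp_0, exp_0 in e0, f0, e2, f2.
rewrite Rmult_1_r in e1, f1, e3, f3. rewrite !exp_Ropp in e1, f1, e3, f3.
assert (hE : 0 < exp 1) by apply exp_pos. assert (hF : 0 < exp k) by apply exp_pos.
assert (HD' : -(1-k)^2*(/(exp 1*exp k) + exp 1*exp k) + (1+k)^2*(exp k*/exp 1 + exp 1*/exp k) - 8*k <> 0).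
{ unfold Dk in HD. unfold Rminus in HD. rewrite !exp_plus, !exp_Ropp, exp_plus in HD.
  replace (-(1-k)^2*(/(exp 1*exp k) + exp 1*exp k) + (1+k)^2*(exp k*/exp 1 + exp 1*/exp k) - 8*k)
   with (- (1 + - k) ^ 2 * / (exp 1 * exp k) + - ((1 + - k) ^ 2 * (exp 1 * exp k)) +
     (1 + k) ^ 2 * (exp k * / exp 1) + (1 + k) ^ 2 * (exp 1 * / exp k) + - (8 * k)) by ring.
  exact HD. }
destruct (hom4 k (exp 1) (exp k) (a'-a) (b'-b) (c'-c) (d'-d) hk hE hF HD') as (q1&q2&q3&q4);
  try nra.
Qed.
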